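(* Let $d\in\mathbb{N}$, $d\ge1$, and let $\alpha\in E_d$ with $\alpha\neq0$. There exists exactly one quad $(i;a,b,c)$ representing $\alpha$ such that $$d-2f(i+1)<af(i)+bf(i+1)+cf(i+2)\le d,$$ and for this quad $s_d(\alpha)=a+b+c$.
   Context: Let $f\colon\mathbb{Z}\to\mathbb{Z}$ be defined by $f(0)=f(1)=1$, $f(i+2)=f(i+1)+f(i)$ for all $i\in\mathbb{Z}$; $\gamma=(1+\sqrt5)/2$; $\mathbb{Z}[\gamma]=\mathbb{Z}\oplus\mathbb{Z}\gamma^{-1}$. For $d\in\mathbb{N}$, $E_d$ is the set of $\alpha\in\mathbb{Z}[\gamma]$ such that $\alpha=\sum_{k=1}^s\gamma^{-i_k}$ and $\sum_{k=1}^sf(i_k)\le d$ for some $s\in\mathbb{N}$ and integers $0\le i_1\le\dots\le i_s$ (empty sum $=0$); $s_d(\alpha)$ is the largest such $s$. A quad is a tuple $(i;a,b,c)$ of non-negative integers with $a\ge1$; it represents $\alpha$ if $\alpha=a\gamma^{-i}+b\gamma^{-i-1}+c\gamma^{-i-2}$. *)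

(* Defs.v *)
From Stdlib Require Import Reals Lra Lia ZArith List Sorted.
Import ListNotations.
Open Scope R_scope.

(* f(0)=f(1)=1, f(i+2)=f(i+1)+f(i); only non-negative arguments are needed. *)
Fixpoint f (n : nat) : Z :=
  match n with
  | O => 1%Z
  | S m => match m with
           | O => 1%Z
           | S k => (f m + f k)%Z
           end
  end.

Definition gamma : R := (1 + sqrt 5) / 2.

Definition gpow_inv (i : nat) : R := / (gamma ^ i).

Definition val (l : list nat) : R := fold_right (fun i acc => gpow_inv i + acc) 0 l.

Definition weight (l : list nat) : Z := fold_right (fun i acc => (f i + acc)%Z) 0%Z l.

Definition admissible (d : Z) (alpha : R) (l : list nat) : Prop :=
  Sorted le l /\ val l = alpha /\ (weight l <= d)%Z.

Definition in_E (d : Z) (alpha : R) : Prop := exists l, admissible d alpha l.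

Definition is_s (d : Z) (alpha : R) (s : nat) : Prop :=
  (exists l, admissible d alpha l /\ length l = s) /\
  (forall l, admissible d alpha l -> (length l <= s)%nat).

Definition represents (i a b c : nat) (alpha : R) : Prop :=
  (1 <= a)%nat /\
  alpha = INR a * gpow_inv i + INR b * gpow_inv (i + 1) + INR c * gpow_inv (i + 2).

Definition good_quad (d : Z) (alpha : R) (i a b c : nat) : Prop :=
  represents i a b c alpha /\
  (d - 2 * f (i + 1) < Z.of_nat a * f i + Z.of_nat b * f (i + 1) + Z.of_nat c * f (i + 2))%Z /\
  (Z.of_nat a * f i + Z.of_nat b * f (i + 1) + Z.of_nat c * f (i + 2) <= d)%Z.

(* Main.v *)
From Stdlib Require Import Reals ZArith List Lra Lia Psatz Sorted.
Require Import Defs.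
Import ListNotations.

Local Open Scope Z_scope.

Lemma f_SS n : f (S (S n)) = f (S n) + f n. Proof. reflexivity. Qed.

Lemma f_pos2 n : 1 <= f n /\ 1 <= f (S n).
Proof. induction n as [|n IH]. simpl; lia. split. lia. rewrite f_SS; lia. Qed.
Lemma f_pos n : 1 <= f n. Proof. apply f_pos2. Qed.

Definition e (n : nat) : Z :=
  match n with O => 1 | S O => 0 | S (S k) => f k end.

Lemma e_rec n : e (S (S n)) = e (S n) + e n.
Proof. destruct n as [|[|k]]; simpl; try reflexivity; lia. Qed.

Lemma f_e n : f (S n) = f n + e (S n).
Proof. destruct n as [|k]. reflexivity. rewrite f_SS. simpl. lia. Qed.

Lemma e_nonneg n : 0 <= e n.
Proof. destruct n as [|[|k]]; simpl; try lia. pose proof (f_pos k); lia. Qed.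

Lemma f_mono n : f n <= f (S n).
Proof. rewrite f_e. pose proof (e_nonneg (S n)); lia. Qed.

Lemma e_le_f n : e n <= f n.
Proof. destruct n as [|[|k]]; try (simpl; lia). change (e (S (S k))) with (f k). pose proof (f_mono k); pose proof (f_mono (S k)); lia. Qed.

Lemma fadd t m0 : f (t + m0) = f (S t) * e (S m0) + f t * e m0.
Proof.
  assert (H: forall m, f (t + m) = f (S t) * e (S m) + f t * e m /\
                       f (t + S m) = f (S t) * e (S (S m)) + f t * e (S m)).
  { clear m0. induction m as [|m IH].
    - rewrite Nat.add_0_r, Nat.add_1_r. simpl (e 1); simpl (e 2); simpl (e 0). lia.
    - destruct IH as [H1 H2]. split. exact H2.
      replace (t + S (S m))%nat with (S (S (t + m))) by lia.
      rewrite f_SS. replace (S (t+m)) with (t + S m)%nat by lia.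
      rewrite H1, H2, (e_rec (S m)), (e_rec m). ring. }
  apply H.
Qed.

Fixpoint g (k : nat) : Z * Z :=
  match k with O => (1, 0) | S k => (snd (g k), fst (g k) - snd (g k)) end.

Lemma g_S k : g (S k) = (snd (g k), fst (g k) - snd (g k)). Proof. reflexivity. Qed.

Lemma g_closed r : g (2 * r) = (e (2 * r), - e (S (2 * r))) /\
                   g (S (2 * r)) = (- e (S (2 * r)), e (S (S (2 * r)))).
Proof.
  induction r as [|r [H1 H2]].
  - simpl. split; reflexivity.
  - replace (2 * S r)%nat with (S (S (2 * r))) by lia.
    assert (H3 : g (S (S (2 * r))) = (e (S (S (2 * r))), - e (S (S (S (2 * r)))))).
    { rewrite g_S, H2. cbn [fst snd]. f_equal.
      pose proof (e_rec (S (2*r))). lia. }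
    split. exact H3. rewrite g_S, H3. cbn [fst snd]. f_equal.
    rewrite (e_rec (S (S (2*r)))). lia.
Qed.

Lemma parity m : exists r, m = (2 * r)%nat \/ m = S (2 * r).
Proof. induction m as [|m [r [H|H]]]. exists O; lia. exists r; lia. exists (S r); lia. Qed.

Lemma g_sign k : exists s, (s = 1 \/ s = -1) /\
  fst (g k) - snd (g k) = s * f k /\ fst (g (S (S k))) - snd (g (S (S k))) = s * f (S (S k)).
Proof.
  destruct (parity k) as [r [-> | ->]].
  - exists 1. split. lia.
    destruct (g_closed r) as [H1 _]. destruct (g_closed (S r)) as [H2 _].
    replace (2 * S r)%nat with (S (S (2*r))) in H2 by lia.
    rewrite H1, H2. cbn [fst snd].
    pose proof (e_rec (2*r)) as E1. pose proof (e_rec (S (S (2*r)))) as E2.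
    simpl (e (S (S (2*r)))) in E1. simpl (e (S (S (S (S (2*r)))))) in E2.
    replace (f (S (S (2*r)))) with (e (S (S (S (S (2*r)))))) by reflexivity.
    replace (f (2*r)) with (e (S (S (2*r)))) by reflexivity.
    rewrite (e_rec (S (S (2*r)))), (e_rec (2*r)). lia.
  - exists (-1). split. lia.
    destruct (g_closed r) as [_ H1]. destruct (g_closed (S r)) as [_ H2].
    replace (2 * S r)%nat with (S (S (2*r))) in H2 by lia.
    rewrite H1, H2. cbn [fst snd].
    replace (f (S (S (S (2*r))))) with (e (S (S (S (S (S (2*r))))))) by reflexivity.
    replace (f (S (2*r))) with (e (S (S (S (2*r))))) by reflexivity.
    rewrite (e_rec (S (S (S (2*r))))), (e_rec (S (2*r))). lia.
Qed.

Definition padd (u v : Z * Z) : Z * Z := (fst u + fst v, snd u + snd v).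
Definition psc (n : Z) (v : Z * Z) : Z * Z := (n * fst v, n * snd v).
Definition lev (t : nat) (v : Z * Z) : Z * Z :=
  (fst v * f t + snd v * e (S t), fst v * e (S t) + snd v * e t).
Definition T (v : Z * Z) : Z * Z := (fst v + snd v, fst v).

Lemma lev_0 v : lev 0 v = v.
Proof. destruct v as [x y]. unfold lev. cbn [fst snd]. simpl (f 0); simpl (e 1); simpl (e 0). f_equal; ring. Qed.

Lemma lev_S t v : lev (S t) v = T (lev t v).
Proof.
  destruct v as [x y]. unfold lev, T. cbn [fst snd]. f_equal.
  all: try (rewrite f_e, e_rec; ring).
Qed.

Lemma lev_add n k v : lev (n + k) v = lev n (lev k v).
Proof. induction n as [|n IH]. simpl. rewrite lev_0. reflexivity.
  simpl (S n + k)%nat. rewrite lev_S, IH, lev_S. reflexivity. Qed.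

Lemma lev_g_ge t m : lev t (g (t + m)) = g m.
Proof.
  revert m; induction t as [|t IH]; intro m.
  - simpl. apply lev_0.
  - rewrite lev_S. replace (S t + m)%nat with (t + S m)%nat by lia. rewrite IH.
    rewrite g_S. unfold T. cbn [fst snd]. destruct (g m) as [x y]. cbn [fst snd]. f_equal; ring.
Qed.

Lemma lev_g_lt n k : lev (n + k) (g k) = (f n, e (S n)).
Proof.
  rewrite lev_add. replace (g k) with (g (k + 0)) by (rewrite Nat.add_0_r; reflexivity).
  rewrite lev_g_ge. unfold lev. simpl (g 0). cbn [fst snd]. f_equal; ring.
Qed.

Lemma lev_padd t u v : lev t (padd u v) = padd (lev t u) (lev t v).
Proof. unfold lev, padd. cbn [fst snd]. f_equal; ring. Qed.
Lemma lev_psc t n v : lev t (psc n v) = psc n (lev t v).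
Proof. unfold lev, psc. cbn [fst snd]. f_equal; ring. Qed.

Lemma lev_inj t u v : lev t u = lev t v -> u = v.
Proof.
  induction t as [|t IH]; intro H.
  - rewrite !lev_0 in H. exact H.
  - rewrite !lev_S in H. apply IH. unfold T in H.
    destruct (lev t u) as [a b], (lev t v) as [c d]. cbn [fst snd] in H.
    injection H as H1 H2. f_equal; lia.
Qed.

Fixpoint co (l : list nat) : Z * Z :=
  match l with [] => (0, 0) | k :: l => padd (g k) (co l) end.

Definition cq (i a b c : nat) : Z * Z :=
  padd (psc (Z.of_nat a) (g i)) (padd (psc (Z.of_nat b) (g (i + 1))) (psc (Z.of_nat c) (g (i + 2)))).

Definition Wq (i a b c : nat) : Z :=
  Z.of_nat a * f i + Z.of_nat b * f (i + 1) + Z.of_nat c * f (i + 2).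

Lemma lev_cq i a b c : lev i (cq i a b c) = (Z.of_nat a + Z.of_nat c, Z.of_nat b - Z.of_nat c).
Proof.
  unfold cq. rewrite !lev_padd, !lev_psc, !lev_g_ge.
  replace (g i) with (g (i + 0)) by (rewrite Nat.add_0_r; reflexivity).
  rewrite lev_g_ge. simpl. unfold psc, padd. cbn [fst snd]. f_equal; ring.
Qed.

Lemma low_pm l : Z.abs (fst (co l) - snd (co l)) <= weight l.
Proof.
  induction l as [|k l IH]. simpl. lia.
  simpl co. simpl weight. unfold padd. cbn [fst snd].
  destruct (g_sign k) as [s [Hs [H1 _]]]. pose proof (f_pos k). destruct Hs; subst; lia.
Qed.

Lemma low_plus l : fst (co l) + snd (co l) <= weight l.
Proof.
  induction l as [|k l IH]. simpl. lia.
  simpl co. simpl weight. unfold padd. cbn [fst snd].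
  assert (fst (g k) + snd (g k) <= f k).
  { destruct (parity k) as [r [-> | ->]].
    - destruct (g_closed r) as [H1 _]. rewrite H1. cbn [fst snd].
      pose proof (e_le_f (2*r)). pose proof (e_nonneg (S (2*r))). lia.
    - destruct (g_closed r) as [_ H1]. rewrite H1. cbn [fst snd].
      change (e (S (S (2*r)))) with (f (2*r)). pose proof (f_mono (2*r)).
      pose proof (e_nonneg (S (2*r))). lia. }
  lia.
Qed.

Definition Lam (t : nat) (v : Z * Z) : Z :=
  (fst (lev t v) + snd (lev t v)) * f (S t) + fst (lev t v) * e (S t).

Lemma Lam_padd t u v : Lam t (padd u v) = Lam t u + Lam t v.
Proof. unfold Lam. rewrite lev_padd. unfold padd. cbn [fst snd]. ring. Qed.

Lemma e_even r : 1 <= e (2 * r) /\ e (S (2 * r)) + 1 <= e (S (S (2 * r))).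
Proof.
  destruct r as [|r]. simpl. lia.
  replace (2 * S r)%nat with (S (S (2 * r))) by lia.
  rewrite (e_rec (S (S (2*r)))).
  change (e (S (S (2*r)))) with (f (2*r)). pose proof (f_pos (2*r)).
  split; lia.
Qed.

Lemma up_elem t k : 2 * f (S t) - f k <= Lam t (g k).
Proof.
  unfold Lam. pose proof (f_pos t) as Ft. pose proof (e_nonneg (S t)) as Et.
  pose proof (f_e t) as FE.
  destruct (le_lt_dec t k) as [Hk | Hk].
  - replace k with (t + (k - t))%nat by lia. set (m := (k - t)%nat).
    rewrite lev_g_ge, fadd.
    destruct (parity m) as [r [Hm | Hm]]; rewrite Hm.
    + destruct (g_closed r) as [H1 _]. rewrite H1. cbn [fst snd].
      destruct (e_even r) as [E1 _]. pose proof (e_nonneg (S (2*r))). nia.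
    + destruct (g_closed r) as [_ H1]. rewrite H1. cbn [fst snd].
      destruct (e_even r) as [_ E2]. pose proof (e_nonneg (S (2*r))). nia.
  - assert (HL: lev t (g k) = (f (t-k), e (S (t-k)))).
    { rewrite <- (lev_g_lt (t-k) k). f_equal. lia. }
    rewrite HL. cbn [fst snd]. set (n := (t - k)%nat).
    assert (Hn : (1 <= n)%nat) by (unfold n; lia).
    destruct n as [|n']. lia.
    pose proof (f_pos n'). pose proof (f_pos (S n')). pose proof (f_pos k).
    change (e (S (S n'))) with (f n'). pose proof (e_nonneg (S t)). nia.
Qed.

Lemma up_list t l : 2 * f (S t) * Z.of_nat (length l) - weight l <= Lam t (co l).
Proof.
  induction l as [|k l IH].
  - simpl. unfold Lam, lev. cbn [fst snd]. lia.
  - simpl co. rewrite Lam_padd. simpl weight. simpl length. rewrite Nat2Z.inj_succ.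
    pose proof (up_elem t k). nia.
Qed.

Lemma Lam_cq i a b c :
  Lam i (cq i a b c) = 2 * f (S i) * (Z.of_nat a + Z.of_nat b + Z.of_nat c) - Wq i a b c.
Proof.
  unfold Lam. rewrite lev_cq. cbn [fst snd]. unfold Wq.
  replace (i + 1)%nat with (S i) by lia. replace (i + 2)%nat with (S (S i)) by lia.
  rewrite f_SS. rewrite (f_e i). ring.
Qed.

Definition goodZ (d : Z) (V : Z * Z) (i a b c : nat) : Prop :=
  (1 <= a)%nat /\ cq i a b c = V /\ d - 2 * f (i + 1) < Wq i a b c /\ Wq i a b c <= d.

Lemma Wq_lev i a b c :
  Wq i a b c = (Z.of_nat a + Z.of_nat c) * f i + (Z.of_nat b - Z.of_nat c) * f (S i)
               + 2 * Z.of_nat c * f (S i).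
Proof.
  unfold Wq. replace (i + 1)%nat with (S i) by lia. replace (i + 2)%nat with (S (S i)) by lia.
  rewrite f_SS. ring.
Qed.

Definition base (V : Z * Z) (t : nat) : Z :=
  fst (lev t V) * f t + snd (lev t V) * f (S t).

Lemma base_S V t : base V (S t) = base V t + 2 * fst (lev t V) * f (S t).
Proof.
  unfold base. rewrite lev_S. unfold T. cbn [fst snd]. rewrite f_SS, (f_e t). ring.
Qed.

Lemma uniq_eq d V i a b c a' b' c' :
  goodZ d V i a b c -> goodZ d V i a' b' c' -> a' = a /\ b' = b /\ c' = c.
Proof.
  intros [Ha [Hq [W1 W2]]] [Ha' [Hq' [W1' W2']]].
  pose proof (lev_cq i a b c) as L1. pose proof (lev_cq i a' b' c') as L2.
  rewrite Hq in L1. rewrite Hq' in L2. rewrite L1 in L2. injection L2 as E1 E2.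
  rewrite Wq_lev in W1, W2, W1', W2'. replace (i + 1)%nat with (S i) in W1, W1' by lia.
  pose proof (f_pos (S i)).
  assert (c' = c).
  { destruct (lt_eq_lt_dec c c') as [[Hc|Hc]|Hc]; [|exact (eq_sym Hc)|];
    exfalso; apply Nat2Z.inj_lt in Hc; nia. }
  subst c'. split; [|split]; try reflexivity; lia.
Qed.

Lemma uniq_lt d V i a b c i' a' b' c' :
  goodZ d V i a b c -> goodZ d V i' a' b' c' -> (i < i')%nat -> False.
Proof.
  intros [Ha [Hq [W1 W2]]] [Ha' [Hq' [W1' W2']]] Hii.
  pose proof (lev_cq i a b c) as L1. rewrite Hq in L1.
  pose proof (lev_cq i' a' b' c') as L2. rewrite Hq' in L2.
  assert (HW : Wq i a b c = base V i + 2 * Z.of_nat c * f (S i)).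
  { rewrite Wq_lev. unfold base. rewrite L1. cbn [fst snd]. ring. }
  assert (HW' : Wq i' a' b' c' = base V i' + 2 * Z.of_nat c' * f (S i')).
  { rewrite Wq_lev. unfold base. rewrite L2. cbn [fst snd]. ring. }
  assert (HS : lev (S i) V = (Z.of_nat a + Z.of_nat b, Z.of_nat a + Z.of_nat c)).
  { rewrite lev_S, L1. unfold T. cbn [fst snd]. f_equal; ring. }
  assert (Hm : forall m, 1 <= fst (lev (S i + m) V) /\ 1 <= snd (lev (S i + m) V)
                         /\ base V (S i) <= base V (S i + m)).
  { induction m as [|m IH].
    - rewrite Nat.add_0_r, HS. cbn [fst snd]. lia.
    - destruct IH as [I1 [I2 I3]]. replace (S i + S m)%nat with (S (S i + m)) by lia.
      rewrite (base_S V (S i + m)). rewrite lev_S. unfold T. cbn [fst snd].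
      pose proof (f_pos (S (S i + m))). nia. }
  destruct (Hm (i' - S i)%nat) as [_ [_ Hb]].
  replace (S i + (i' - S i))%nat with i' in Hb by lia.
  rewrite base_S, L1 in Hb. cbn [fst snd] in Hb.
  replace (i + 1)%nat with (S i) in W1 by lia.
  pose proof (f_pos (S i')). pose proof (f_pos (S i)).
  assert (0 <= 2 * Z.of_nat c' * f (S i')) by nia.
  nia.
Qed.

Lemma cq_step_a i a b c : cq i (S a) b c = cq i a (S b) (S c).
Proof. apply (lev_inj i). rewrite !lev_cq. f_equal; lia. Qed.

Lemma cq_step_i i b c : cq i 1 b c = cq (S i) (S b) (S c) 0.
Proof. apply (lev_inj (S i)). rewrite lev_S, !lev_cq. unfold T. cbn [fst snd]. f_equal; lia. Qed.

Lemma Wq_step_a i a b c : Wq i a (S b) (S c) = Wq i (S a) b c + 2 * f (S i).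
Proof. unfold Wq. replace (i + 1)%nat with (S i) by lia. replace (i + 2)%nat with (S (S i)) by lia.
  rewrite !Nat2Z.inj_succ, f_SS. rewrite (f_e i). ring. Qed.

Lemma Wq_step_i i b c : Wq (S i) (S b) (S c) 0 = Wq i 1 b c + 2 * f (S i).
Proof. unfold Wq. replace (i + 1)%nat with (S i) by lia. replace (i + 2)%nat with (S (S i)) by lia.
  replace (S i + 1)%nat with (S (S i)) by lia. replace (S i + 2)%nat with (S (S (S i))) by lia.
  rewrite !Nat2Z.inj_succ, !f_SS. rewrite (f_e i). simpl Z.of_nat. ring. Qed.

Lemma chain d V : forall n i a b c, d - Wq i a b c < Z.of_nat n -> (1 <= a)%nat ->
  cq i a b c = V -> Wq i a b c <= d -> exists i a b c, goodZ d V i a b c.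
Proof.
  induction n as [|n IH]; intros i a b c Hn Ha Hq Hw.
  - simpl in Hn. lia.
  - destruct (Z_lt_le_dec (d - 2 * f (i + 1)) (Wq i a b c)) as [Hg|Hg].
    + exists i, a, b, c. repeat split; auto.
    + replace (i + 1)%nat with (S i) in Hg by lia. pose proof (f_pos (S i)).
      destruct a as [|[|a]]. lia.
      * apply (IH (S i) (S b) (S c) 0%nat).
        -- rewrite Wq_step_i. rewrite Nat2Z.inj_succ in Hn. lia.
        -- lia.
        -- rewrite <- cq_step_i. exact Hq.
        -- rewrite Wq_step_i. lia.
      * apply (IH i (S a) (S b) (S c)).
        -- rewrite Wq_step_a. rewrite Nat2Z.inj_succ in Hn. lia.
        -- lia.
        -- rewrite <- cq_step_a. exact Hq.
        -- rewrite Wq_step_a. lia.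
Qed.

Lemma exist_low V w : forall t,
  1 <= fst (lev t V) -> 1 <= fst (lev t V) + snd (lev t V) ->
  Z.abs (fst V - snd V) <= w -> fst V + snd V <= w ->
  exists i a b c, (1 <= a)%nat /\ cq i a b c = V /\ Wq i a b c <= w.
Proof.
  intros t. induction t as [|t IH]; intros H1 H2 Hp Hs.
  - rewrite lev_0 in H1, H2.
    destruct (Z_le_gt_dec (snd V) 0) as [HB|HB].
    + exists 0%nat, (Z.to_nat (fst V + snd V)), 0%nat, (Z.to_nat (- snd V)).
      assert (Hc : cq 0 (Z.to_nat (fst V + snd V)) 0 (Z.to_nat (- snd V)) = V).
      { apply (lev_inj 0). rewrite lev_cq, lev_0. destruct V as [x y]. cbn [fst snd] in *.
        f_equal; rewrite !Z2Nat.id; lia. }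
      split. lia. split. exact Hc.
      destruct (g_sign 0) as [s [Hs1 [Hg1 Hg2]]].
      assert (E : fst V - snd V = s * Wq 0 (Z.to_nat (fst V + snd V)) 0 (Z.to_nat (- snd V))).
      { rewrite <- Hc at 1 2. unfold cq, Wq, padd, psc. cbn [fst snd].
        replace (0 + 2)%nat with 2%nat in * by lia. 
        set (a := Z.of_nat (Z.to_nat (fst V + snd V))). set (c := Z.of_nat (Z.to_nat (- snd V))).
        assert (fst (g 0) = snd (g 0) + s * f 0) by lia.
        assert (fst (g 2) = snd (g 2) + s * f 2) by lia.
        rewrite H, H0. simpl Z.of_nat. ring. }
      destruct Hs1; subst s; lia.
    + exists 0%nat, (Z.to_nat (fst V)), (Z.to_nat (snd V)), 0%nat.
      assert (Hc : cq 0 (Z.to_nat (fst V)) (Z.to_nat (snd V)) 0 = V).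
      { apply (lev_inj 0). rewrite lev_cq, lev_0. destruct V as [x y]. cbn [fst snd] in *.
        f_equal; rewrite !Z2Nat.id; lia. }
      split. lia. split. exact Hc. unfold Wq. simpl (f (0+1)). simpl (f 0).
      rewrite !Z2Nat.id; lia.
  - destruct (Z_le_gt_dec (snd (lev (S t) V)) 0) as [HB|HB].
    + set (A := fst (lev (S t) V)) in *. set (B := snd (lev (S t) V)) in *.
      exists (S t), (Z.to_nat (A + B)), 0%nat, (Z.to_nat (- B)).
      assert (Hc : cq (S t) (Z.to_nat (A + B)) 0 (Z.to_nat (- B)) = V).
      { apply (lev_inj (S t)). rewrite lev_cq. rewrite (surjective_pairing (lev (S t) V)).
        fold A B. f_equal; rewrite !Z2Nat.id; lia. }
      split. lia. split. exact Hc.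
      destruct (g_sign (S t)) as [s [Hs1 [Hg1 Hg2]]].
      assert (E : fst V - snd V = s * Wq (S t) (Z.to_nat (A + B)) 0 (Z.to_nat (- B))).
      { rewrite <- Hc at 1 2. unfold cq, Wq, padd, psc. cbn [fst snd].
        replace (S t + 2)%nat with (S (S (S t))) in * by lia.
        set (a := Z.of_nat (Z.to_nat (A + B))). set (c := Z.of_nat (Z.to_nat (- B))).
        assert (fst (g (S t)) = snd (g (S t)) + s * f (S t)) by lia.
        assert (fst (g (S (S (S t)))) = snd (g (S (S (S t)))) + s * f (S (S (S t)))) by lia.
        rewrite H, H0. simpl Z.of_nat. ring. }
      destruct Hs1; subst s; lia.
    + apply IH; auto.
      * rewrite lev_S in HB. unfold T in HB. cbn [fst snd] in HB. lia.
      * rewrite lev_S in H1. unfold T in H1. cbn [fst snd] in H1. lia.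
Qed.

Fixpoint mx (l : list nat) : nat := match l with [] => 0%nat | k :: l => Nat.max k (mx l) end.

Lemma mx_in l k : In k l -> (k <= mx l)%nat.
Proof. induction l as [|x l IH]; simpl; intros H. contradiction. destruct H; subst; [lia|]. specialize (IH H); lia. Qed.

Lemma lev_top M l : (forall k, In k l -> (k <= M)%nat) ->
  Z.of_nat (length l) <= fst (lev M (co l)) /\
  Z.of_nat (length l) <= fst (lev M (co l)) + snd (lev M (co l)).
Proof.
  induction l as [|k l IH]; intros Hl.
  - simpl. unfold lev. cbn [fst snd]. lia.
  - simpl co. rewrite lev_padd. unfold padd. cbn [fst snd]. simpl length. rewrite Nat2Z.inj_succ.
    assert (HL: lev M (g k) = (f (M-k), e (S (M-k)))).
    { rewrite <- (lev_g_lt (M-k) k). f_equal. specialize (Hl k (or_introl eq_refl)). lia. }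
    rewrite HL. cbn [fst snd].
    destruct IH as [I1 I2]. intros x Hx. apply Hl. right. exact Hx.
    pose proof (f_pos (M-k)). pose proof (f_e (M-k)). pose proof (f_pos (S (M-k))). lia.
Qed.

Lemma descent : forall n p q, Z.abs q < Z.of_nat n -> 5 * q * q = p * p -> q = 0.
Proof.
  induction n as [|n IH]; intros p q Hn H. simpl in Hn. lia.
  destruct (Z.eq_dec q 0) as [|Hq]. exact e0. exfalso.
  set (q0 := Z.abs q). set (p0 := Z.abs p).
  assert (H0 : 5 * q0 * q0 = p0 * p0).
  { unfold q0, p0. rewrite <- !Z.abs_mul. rewrite <- H. rewrite !Z.abs_mul. simpl. lia. }
  assert (Hq0 : 0 < q0) by (unfold q0; lia).
  assert (Hp0 : 0 <= p0) by (unfold p0; lia).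
  assert (A1 : 2 * q0 < p0) by nia.
  assert (A2 : p0 < 3 * q0) by nia.
  assert (p0 - 2 * q0 = 0).
  { apply (IH (5 * q0 - 2 * p0)). rewrite Z.abs_eq by lia. unfold q0 in *. lia. nia. }
  lia.
Qed.

Local Open Scope R_scope.

Definition gi : R := gamma - 1.
Definition rv (v : Z * Z) : R := IZR (fst v) + IZR (snd v) * gi.

Lemma s5 : sqrt 5 * sqrt 5 = 5. Proof. apply sqrt_sqrt. lra. Qed.

Lemma gamma_gi : gamma * gi = 1.
Proof. unfold gi, gamma. pose proof s5. nra. Qed.

Lemma gi_sq : gi * gi = 1 - gi.
Proof. unfold gi, gamma. pose proof s5. nra. Qed.

Lemma ginv : / gamma = gi.
Proof.
  assert (gamma <> 0). { intro H. pose proof gamma_gi. rewrite H in H0. lra. }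
  apply (Rmult_eq_reg_l gamma); [|exact H]. rewrite Rinv_r by exact H. symmetry; apply gamma_gi.
Qed.

Lemma gpow_g k : gpow_inv k = rv (g k).
Proof.
  induction k as [|k IH].
  - unfold gpow_inv, rv. simpl. rewrite Rinv_1. ring.
  - unfold gpow_inv in *. simpl pow. rewrite Rinv_mult, IH, ginv, g_S. unfold rv. cbn [fst snd].
    rewrite minus_IZR.
    replace (gi * (IZR (fst (g k)) + IZR (snd (g k)) * gi)) with
      (IZR (fst (g k)) * gi + IZR (snd (g k)) * (gi * gi)) by ring.
    rewrite gi_sq. ring.
Qed.

Lemma rv_padd u v : rv (padd u v) = rv u + rv v.
Proof. unfold rv, padd. cbn [fst snd]. rewrite !plus_IZR. ring. Qed.
Lemma rv_psc n v : rv (psc n v) = IZR n * rv v.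
Proof. unfold rv, psc. cbn [fst snd]. rewrite !mult_IZR. ring. Qed.

Lemma val_co l : val l = rv (co l).
Proof.
  induction l as [|k l IH]. unfold rv; simpl; ring.
  simpl val. simpl co. rewrite rv_padd, <- IH, gpow_g. reflexivity.
Qed.

Lemma quad_rv i a b c :
  INR a * gpow_inv i + INR b * gpow_inv (i + 1) + INR c * gpow_inv (i + 2) = rv (cq i a b c).
Proof. unfold cq. rewrite !rv_padd, !rv_psc, !gpow_g, !INR_IZR_INZ. ring. Qed.

Lemma rv_inj u v : rv u = rv v -> u = v.
Proof.
  destruct u as [x y], v as [x' y']. unfold rv, gi, gamma. cbn [fst snd]. intro H.
  set (q := (y - y')%Z). set (p := (q - 2 * (x - x'))%Z).
  assert (Hq : IZR q * sqrt 5 = IZR p).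
  { unfold p, q. rewrite !minus_IZR, mult_IZR, minus_IZR. simpl (IZR 2). lra. }
  assert (H5 : (5 * q * q = p * p)%Z).
  { apply eq_IZR. rewrite !mult_IZR. rewrite <- Hq. simpl (IZR 5).
    replace (IZR q * sqrt 5 * (IZR q * sqrt 5)) with (IZR q * IZR q * (sqrt 5 * sqrt 5)) by ring.
    rewrite s5. ring. }
  pose proof (descent (S (Z.to_nat (Z.abs q))) p q) as D.
  assert (q = 0%Z) by (apply D; [lia | exact H5]).
  assert (y = y') by (unfold q in *; lia).
  subst y'. assert (IZR x = IZR x') by lra. apply eq_IZR in H1. subst. reflexivity.
Qed.

Lemma val_app l1 l2 : val (l1 ++ l2) = val l1 + val l2.
Proof. induction l1 as [|k l IH]; simpl. ring. rewrite IH. ring. Qed.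
Lemma weight_app l1 l2 : weight (l1 ++ l2) = (weight l1 + weight l2)%Z.
Proof. induction l1 as [|k l IH]; simpl. ring. rewrite IH. ring. Qed.
Lemma val_rep x n : val (repeat x n) = INR n * gpow_inv x.
Proof. induction n as [|n IH]; simpl repeat; simpl val. simpl. ring. rewrite IH, S_INR. ring. Qed.
Lemma weight_rep x n : weight (repeat x n) = (Z.of_nat n * f x)%Z.
Proof. induction n as [|n IH]; simpl repeat; simpl weight. simpl. ring. rewrite IH, Nat2Z.inj_succ. ring. Qed.

Lemma sorted_rep x n l : Sorted le l -> (forall y, In y l -> (x <= y)%nat) -> Sorted le (repeat x n ++ l).
Proof.
  intros Hs Hl. induction n as [|n IH]. exact Hs.
  simpl. constructor. exact IH.
  destruct n as [|n]. simpl. destruct l as [|y l]. constructor. constructor. apply Hl. left; reflexivity.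
  simpl. constructor. lia.
Qed.

Definition qlist (i a b c : nat) : list nat := repeat i a ++ repeat (i + 1)%nat b ++ repeat (i + 2)%nat c.

Lemma qlist_sorted i a b c : Sorted le (qlist i a b c).
Proof.
  unfold qlist. apply sorted_rep.
  - apply sorted_rep. rewrite <- app_nil_r. apply sorted_rep. constructor.
    intros y H; contradiction. intros y H. apply repeat_spec in H. lia.
  - intros y H. apply in_app_or in H. destruct H as [H|H]; apply repeat_spec in H; lia.
Qed.

Theorem mainTheorem17 (d : Z) (alpha : R) :
  (1 <= d)%Z -> in_E d alpha -> alpha <> 0%R ->
  exists i a b c : nat,
    good_quad d alpha i a b c /\
    (forall i' a' b' c' : nat, good_quad d alpha i' a' b' c' ->
       i' = i /\ a' = a /\ b' = b /\ c' = c) /\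
    is_s d alpha (a + b + c).
Proof.
  intros Hd [L [HS [Hv Hw]]] Hnz.
  set (V := co L).
  assert (Hvv : alpha = rv V) by (rewrite <- Hv; apply val_co).
  assert (Hgood : forall i a b c, good_quad d alpha i a b c <-> goodZ d V i a b c).
  { intros i a b c. unfold good_quad, represents, goodZ. rewrite quad_rv. split.
    - intros [[Ha Hr] [W1 W2]]. rewrite Hvv in Hr. apply rv_inj in Hr.
      split. exact Ha. split. symmetry; exact Hr. unfold Wq. split; assumption.
    - intros [Ha [Hr [W1 W2]]]. split. split. exact Ha. rewrite Hvv, Hr. reflexivity.
      unfold Wq in W1, W2. split; assumption. }
  assert (HL : L <> []). { intro E. subst L. simpl in Hv. apply Hnz. symmetry; exact Hv. }
  destruct (lev_top (mx L) L (mx_in L)) as [T1 T2].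
  assert (Hlen : (1 <= Z.of_nat (length L))%Z).
  { destruct L. contradiction. simpl length. lia. }
  destruct (exist_low V (weight L) (mx L)) as [i0 [a0 [b0 [c0 [Ha0 [Hq0 Hw0]]]]]];
    try (unfold V; lia).
  apply low_pm. apply low_plus.
  destruct (chain d V (S (Z.to_nat (d - Wq i0 a0 b0 c0))) i0 a0 b0 c0)
    as [i [a [b [c Hg]]]]; auto; try lia.
  exists i, a, b, c. split. apply Hgood; exact Hg. split.
  - intros i' a' b' c' H'. apply Hgood in H'.
    destruct (lt_eq_lt_dec i i') as [[Hi|Hi]|Hi].
    + exfalso. exact (uniq_lt d V i a b c i' a' b' c' Hg H' Hi).
    + subst i'. destruct (uniq_eq d V i a b c a' b' c' Hg H') as [E1 [E2 E3]]. auto.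
    + exfalso. exact (uniq_lt d V i' a' b' c' i a b c H' Hg Hi).
  - destruct Hg as [Ha [Hq [W1 W2]]]. split.
    + exists (qlist i a b c). split. split. apply qlist_sorted. split.
      * unfold qlist. rewrite !val_app, !val_rep, Hvv, <- Hq, <- quad_rv. ring.
      * unfold qlist. rewrite !weight_app, !weight_rep. unfold Wq in W2. lia.
      * unfold qlist. rewrite !length_app, !repeat_length. lia.
    + intros l' [_ [Hv' Hw']].
      assert (Hc : co l' = V). { apply rv_inj. rewrite <- val_co, Hv'. exact Hvv. }
      pose proof (up_list i l') as U. rewrite Hc, <- Hq, Lam_cq in U.
      replace (i + 1)%nat with (S i) in W1 by lia. pose proof (f_pos (S i)).
      assert (Z.of_nat (length l') < Z.of_nat a + Z.of_nat b + Z.of_nat c + 1)%Z by nia.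
      lia.
Qed.
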